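(* Consider the admission control model described in the context, with discount rate $\alpha>0$, and suppose: (i) $0\le \Delta d_{i+1}\le \Delta d_i$ for $1\le i\le n-1$, and $\Delta d_1>0$; (ii) $\Delta h_{i+1}\ge \Delta h_i\ge 0$ for $1\le i\le n-1$. Define $\nu_0,\dots,\nu_{n-1}$ recursively by $$\nu_0=\frac{\Delta h_1}{\alpha+\Delta d_1},\qquad \nu_j=\nu_{j-1}+\frac{\Delta h_{j+1}-\nu_{j-1}(\alpha+\Delta d_{j+1})}{\alpha+\Delta d_{j+1}+w^{S_{j+1}}_{j-1}/\rho_{j-1}},\quad 1\le j\le n-1.$$ Then the model is PCL-indexable relative to threshold policies and the rejection measure, in the following sense: (a) $w^S_i>0$ for every $S\in\mathcal F$ and $0\le i\le n-1$, and $\nu_0\le\nu_1\le\cdots\le\nu_{n-1}$; (b) the $\nu$-charge problem is indexable relative to threshold policies with dynamic allocation indices $\nu_j$: for every $\nu\in\mathbb R$, the set of states $j\in\{0,\dots,n-1\}$ at which shutting the gate is optimal in the $\nu$-charge problem equals $\{j: \nu\le \nu_j\}$ (which belongs to $\mathcal F$ and decreases from $\{0,\dots,n-1\}$ to $\emptyset$ as $\nu$ increases from $-\infty$ to $+\infty$); (c) for every $j\in\{0,\dots,n-1\}$, $$\nu_j=\max\left\{\frac{v^{S\setminus\{j\}}_j-v^S_j}{b^S_j-b^{S\setminus\{j\}}_j}:\ j\in S\in\{S_1,\dots,S_n\}\right\}.$$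
   Context: Admission control model: a single-server queue with finite buffer, whose number in system $L(t)\in N=\{0,1,\dots,n\}$ ($n\ge1$) evolves in continuous time. In state $i$ customers arrive as a Poisson stream of rate $\lambda_i>0$ and the server completes services at rate $\mu_i>0$ ($1\le i\le n$), with $\mu_0=0$. A gatekeeper chooses at each time an action $a(t)\in\{0,1\}$: $a=1$ (shut the entry gate; arriving customers are rejected) or $a=0$ (open; arriving customers are admitted). In state $n$ the gate is always shut. Policies are stationary (possibly randomized) functions of the state. Holding costs accrue at rate $h_i$ in state $i$, and are discounted at rate $\alpha>0$. For a policy $u$ and initial state $i$: $v^u_i=E^u_i[\int_0^\infty h_{L(t)}e^{-\alpha t}dt]$ and $b^u_i=E^u_i[\int_0^\infty \lambda_{L(t)}a(t)e^{-\alpha t}dt]$ (expected discounted number of rejections). The $\nu$-charge problem is to minimize $v^u_i+\nu b^u_i$ over stationary policies. For $S\subseteq\{0,\dots,n-1\}$, the $S$-active policy shuts the gate exactly in states $S\cup\{n\}$; write $v^S_i,b^S_i$ for its measures. Marginal workloads: $w^S_i=\lambda_i\,[1-(b^S_{i+1}-b^S_i)]$ for $0\le i\le n-1$. Threshold sets: $S_k=\{k-1,\dots,n-1\}$ for $1\le k\le n$, $S_{n+1}=\emptyset$, and $\mathcal F=\{S_1,\dots,S_{n+1}\}$. Notation: $\Delta x_i=x_i-x_{i-1}$; $d_i=\mu_i-\lambda_i$ (so $d_0=-\lambda_0$); $\rho_i=\lambda_i/\mu_{i+1}$. *)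

(* Defs.v *)
From mathcomp Require Import all_boot all_order all_algebra.
Set Implicit Arguments. Unset Strict Implicit. Unset Printing Implicit Defensive.
Import Order.TTheory GRing.Theory Num.Theory.
Local Open Scope ring_scope.

(* States are 0..n.  Rates and costs are functions nat -> R, only their values
   on the relevant states matter.  mu_0 = 0 by convention (mu0 below). *)

Definition mu0 (R : realFieldType) (mu : nat -> R) (i : nat) : R :=
  if i == 0%N then 0 else mu i.

(* A stationary randomized policy u: u i = probability of shutting the gate
   in state i (0 <= u i <= 1 for i < n); in state n the gate is always shut. *)
Definition policy (R : realFieldType) (n : nat) (u : nat -> R) : Prop :=
  forall i, (i < n)%N -> 0 <= u i <= 1.

Definition shut (R : realFieldType) (n : nat) (u : nat -> R) (i : nat) : R :=
  if (n <= i)%N then 1 else u i.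

Definition gen (R : realFieldType) (n : nat) (lam mu : nat -> R) (u : nat -> R)
  : 'M[R]_n.+1 :=
  \matrix_(i, j)
    (if (j : nat) == (i : nat).+1 then lam i * (1 - shut n u i)
     else if (j : nat).+1 == (i : nat) then mu0 mu i
     else if (i : nat) == (j : nat) then - (lam i * (1 - shut n u i) + mu0 mu i)
     else 0).

(* Expected total alpha-discounted reward  E_i[ int_0^oo f(L(t)) e^{-alpha t} dt ]
   of a finite-state CTMC with generator Q, computed by the resolvent
   (alpha I - Q)^{-1} f. *)
Definition disc_measure (R : realFieldType) (n : nat) (lam mu : nat -> R)
  (alpha : R) (u : nat -> R) (f : nat -> R) (i : nat) : R :=
  (invmx (alpha%:M - gen n lam mu u) *m \col_(k < n.+1) f k) (inord i) 0.

Definition vm (R : realFieldType) (n : nat) (lam mu h : nat -> R) (alpha : R)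
  (u : nat -> R) (i : nat) : R :=
  disc_measure n lam mu alpha u h i.

Definition bm (R : realFieldType) (n : nat) (lam mu : nat -> R) (alpha : R)
  (u : nat -> R) (i : nat) : R :=
  disc_measure n lam mu alpha u (fun k => lam k * shut n u k) i.

Definition Sactive (R : realFieldType) (S : pred nat) : nat -> R :=
  fun i => if S i then 1 else 0.

Definition vS (R : realFieldType) (n : nat) (lam mu h : nat -> R) (alpha : R)
  (S : pred nat) (i : nat) : R := vm n lam mu h alpha (Sactive R S) i.

Definition bS (R : realFieldType) (n : nat) (lam mu : nat -> R) (alpha : R)
  (S : pred nat) (i : nat) : R := bm n lam mu alpha (Sactive R S) i.

Definition wS (R : realFieldType) (n : nat) (lam mu : nat -> R) (alpha : R)
  (S : pred nat) (i : nat) : R :=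
  lam i * (1 - (bS n lam mu alpha S i.+1 - bS n lam mu alpha S i)).

Definition Sk (n k : nat) : pred nat := fun i => (k.-1 <= i)%N && (i < n)%N.

Definition setD1n (S : pred nat) (j : nat) : pred nat := fun i => S i && (i != j).

Definition dd (R : realFieldType) (lam mu : nat -> R) (i : nat) : R :=
  mu0 mu i - lam i.
Definition Dd (R : realFieldType) (lam mu : nat -> R) (i : nat) : R :=
  dd lam mu i - dd lam mu i.-1.
Definition Dh (R : realFieldType) (h : nat -> R) (i : nat) : R := h i - h i.-1.
Definition rho (R : realFieldType) (lam mu : nat -> R) (i : nat) : R :=
  lam i / mu i.+1.

Fixpoint nuidx (R : realFieldType) (n : nat) (lam mu h : nat -> R) (alpha : R)
  (j : nat) : R :=
  match j with
  | 0 => Dh h 1 / (alpha + Dd lam mu 1)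
  | j'.+1 =>
      let p := nuidx n lam mu h alpha j' in
      p + (Dh h j'.+2 - p * (alpha + Dd lam mu j'.+2))
          / (alpha + Dd lam mu j'.+2 + wS n lam mu alpha (Sk n j'.+2) j' / rho lam mu j')
  end.

Definition charge_obj (R : realFieldType) (n : nat) (lam mu h : nat -> R) (alpha : R)
  (nu : R) (u : nat -> R) (i : nat) : R :=
  vm n lam mu h alpha u i + nu * bm n lam mu alpha u i.

Definition charge_optimal (R : realFieldType) (n : nat) (lam mu h : nat -> R)
  (alpha : R) (nu : R) (u : nat -> R) : Prop :=
  policy n u /\
  forall u', policy n u' -> forall i, (i <= n)%N ->
    charge_obj n lam mu h alpha nu u i <= charge_obj n lam mu h alpha nu u' i.

Definition shut_optimal (R : realFieldType) (n : nat) (lam mu h : nat -> R)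
  (alpha : R) (nu : R) (j : nat) : Prop :=
  exists u, charge_optimal n lam mu h alpha nu u /\ u j = 1.

(* Main.v *)
Require Import Defs.
From mathcomp Require Import all_boot all_order all_algebra.
From mathcomp Require Import ring lra zify.
Set Warnings "-notation-overridden -ambiguous-paths".
Import Order.TTheory GRing.Theory Num.Theory.
Local Open Scope ring_scope.

Lemma unit_of_ker (F : fieldType) (N : nat) (A : 'M[F]_N) :
  (forall x : 'cV_N, A *m x = 0 -> x = 0) -> A \in unitmx.
Proof.
move=> H; rewrite -unitmx_tr -row_free_unit -kermx_eq0; apply/eqP.
apply/row_matrixP => i; rewrite row0.
have /eqP E : row i (kermx A^T) *m A^T == 0.
  by rewrite -sub_kermx row_sub.
have : A *m (row i (kermx A^T))^T = 0.
  by rewrite -[A in A *m _]trmxK -trmx_mul E trmx0.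
by move/H => /(congr1 trmx); rewrite trmxK trmx0.
Qed.


Ltac clia := repeat match goal with
  | H : ?T |- _ => lazymatch T with
      | is_true (leq _ _) => fail
      | is_true (_ && _) => fail
      | is_true (~~ _) => fail
      | @eq ?t _ _ => tryif unify t nat then fail else clear H
      | ~ (@eq ?t _ _) => tryif unify t nat then fail else clear H
      | _ => clear H
     end
  end; lia.

Lemma eq_by (R : zmodType) (a b c d : R) : c = d -> a - b = c - d -> a = b.
Proof. by move=> -> /eqP; rewrite subrr subr_eq0 => /eqP. Qed.

Lemma eq_by2 (R : comRingType) (a b c d e f t : R) :
  c = d -> e = f -> a - b = (c - d) + t * (e - f) -> a = b.
Proof. by move=> -> -> /eqP; rewrite !subrr mulr0 addr0 subr_eq0 => /eqP. Qed.

Section Model.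
Variables (R : realFieldType) (n : nat) (lam mu h : nat -> R) (alpha : R).

Definition up (u : nat -> R) i := lam i * (1 - shut n u i).
Definition dn i := mu0 mu i.
Definition opx u (x : nat -> R) i :=
  (alpha + up u i + dn i) * x i - up u i * x i.+1 - dn i * x i.-1.

Lemma up_n u : up u n = 0.
Proof. by rewrite /up /shut leqnn subrr mulr0. Qed.

Lemma dn0 : dn 0 = 0.
Proof. by []. Qed.

Lemma M_mul u (X : 'cV[R]_n.+1) (i : 'I_n.+1) :
  ((alpha%:M - gen n lam mu u) *m X) i 0 = opx u (fun k => X (inord k) 0) i.
Proof.
set F := fun k => X (inord k) 0.
rewrite mxE.
have -> : \sum_j (alpha%:M - gen n lam mu u) i j * X j 0 =
   \sum_(j < n.+1) ((if (j:nat) == i.+1 then - up u i * F j else 0)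
     + (if (j:nat) == i.-1 then - dn i * F j else 0)
     + (if (j:nat) == i then (alpha + up u i + dn i) * F j else 0)).
  apply: eq_bigr => j _.
  rewrite !mxE /F inord_val -/(up u i) -/(dn i).
  have [e1|n1] := eqVneq (j:nat) i.+1.
    have e2 : (j.+1 == i) = false by apply/negbTE; lia.
    have e3 : (i == j :> nat) = false by apply/negbTE; lia.
    have e4 : (j == i.-1 :> nat) = false by apply/negbTE; lia.
    have e5 : (j == i :> nat) = false by apply/negbTE; lia.
    have e6 : (i == j) = false by apply/negbTE; apply/eqP => /(congr1 val) /=; lia.
    rewrite ?e2 ?e3 ?e4 ?e5 ?e6 /=; ring.
  have [e2|n2] := eqVneq j.+1 i.
    have e3 : (i == j :> nat) = false by apply/negbTE; lia.
    have e4 : (j == i.-1 :> nat) = true by apply/eqP; lia.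
    have e5 : (j == i :> nat) = false by apply/negbTE; lia.
    have e6 : (i == j) = false by apply/negbTE; apply/eqP => /(congr1 val) /=; lia.
    rewrite ?e3 ?e4 ?e5 ?e6 /=; ring.
  have [e3|n3] := eqVneq (i:nat) j.
    have e4 : (j == i.-1 :> nat) = ((i:nat) == 0%N).
      by apply/idP/idP => /eqP ?; apply/eqP; lia.
    have e5 : (j == i :> nat) = true by apply/eqP; lia.
    have e6 : (i == j) = true by apply/eqP; apply: val_inj.
    rewrite ?e4 ?e5 ?e6 /=.
    idtac.
    case: ((i:nat) =P 0%N) => [i0|_] /=; last by ring.
    rewrite /dn i0 /mu0 eqxx; ring.
  have e4 : (j == i.-1 :> nat) = false.
    by apply/negbTE; move: n2 n3 => /eqP n2 /eqP n3; apply/eqP; lia.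
  have e5 : (j == i :> nat) = false by apply/negbTE; move: n3 => /eqP n3; apply/eqP; lia.
  have e6 : (i == j) = false by apply/negbTE; apply/eqP => E; move: n3; rewrite E eqxx.
  rewrite ?e4 ?e5 ?e6 /=.
  by rewrite mulr0n subrr mul0r !addr0.
rewrite !big_split /= -!big_mkcond /=.
rewrite (big_ord1_eq _ (fun j => - up u i * F j)) (big_ord1_eq _ (fun j => - dn i * F j)).
rewrite (big_ord1_eq _ (fun j => (alpha + up u i + dn i) * F j)).
rewrite /opx ltn_ord (leq_ltn_trans (leq_pred i) (ltn_ord i)).
case: ltnP => Hi; first by ring.
have -> : (i : nat) = n by have := ltn_ord i; lia.
rewrite up_n; ring.
Qed.


Hypothesis Ha : 0 < alpha.
Hypothesis Hlam : forall i, (i <= n)%N -> 0 < lam i.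
Hypothesis Hmu : forall i, (1 <= i <= n)%N -> 0 < mu i.

Lemma up_ge0 u i : policy n u -> (i <= n)%N -> 0 <= up u i.
Proof.
move=> Pu Hi; rewrite /up /shut; case: leqP => Hn; first by rewrite subrr mulr0.
have /andP [_ u1] := Pu i Hn; have L := Hlam _ Hi; nra.
Qed.

Lemma up_le u i : policy n u -> (i <= n)%N -> up u i <= lam i.
Proof.
move=> Pu Hi; have L := Hlam _ Hi; rewrite /up /shut; case: leqP => Hn; first by rewrite subrr mulr0; apply: ltW.
have /andP [u0 _] := Pu i Hn; nra.
Qed.

Lemma dn_ge0 i : (i <= n)%N -> 0 <= dn i.
Proof.
move=> Hi; rewrite /dn /mu0; case: eqP => // i0.
by apply: ltW; apply: Hmu; apply/andP; split => //; lia.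
Qed.

Lemma argmin (y : nat -> R) N : exists i0, (i0 <= N)%N /\ forall i, (i <= N)%N -> y i0 <= y i.
Proof.
elim: N => [|N [i0 [Hi0 Hm]]].
  by exists 0%N; split => // i; rewrite leqn0 => /eqP ->.
case: (leP (y i0) (y N.+1)) => Hc.
  exists i0; split; first lia.
  move=> i; rewrite leq_eqVlt => /orP [/eqP -> //| Hi]; exact: Hm.
exists N.+1; split => // i; rewrite leq_eqVlt => /orP [/eqP -> //| Hi].
apply: le_trans (Hm i Hi); exact: ltW.
Qed.

Lemma minprinc u y : policy n u -> (forall i, (i <= n)%N -> 0 <= opx u y i) ->
  forall i, (i <= n)%N -> 0 <= y i.
Proof.
move=> Pu Hop.
have [i0 [Hi0 Hm]] := argmin y n.
suff : 0 <= y i0 by move=> H i Hi; exact: le_trans H (Hm i Hi).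
rewrite leNgt; apply/negP => Hneg.
have H := Hop i0 Hi0; move: H; rewrite /opx.
have U := up_ge0 _ _ Pu Hi0; have D := dn_ge0 _ Hi0.
have T1 : up u i0 * (y i0 - y i0.+1) <= 0.
  case: (ltnP i0 n) => Hl.
    have := Hm _ Hl; move=> Hy; nra.
  have -> : i0 = n by lia.
  by rewrite up_n mul0r.
have T2 : dn i0 * (y i0 - y i0.-1) <= 0.
  case: i0 Hi0 Hm Hneg U D T1 => [|i0] Hi0 Hm Hneg U D T1; first by rewrite dn0 mul0r.
  have := Hm i0 (ltnW Hi0); move=> Hy /=; nra.
move=> H; have A : alpha * y i0 < 0 by rewrite pmulr_rlt0.
lra.
Qed.

Lemma opx_lin u (a b : R) x y i :
  opx u (fun k => a * x k + b * y k) i = a * opx u x i + b * opx u y i.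
Proof. rewrite /opx; ring. Qed.

Lemma minprinc0 u y : policy n u -> (forall i, (i <= n)%N -> opx u y i = 0) ->
  forall i, (i <= n)%N -> y i = 0.
Proof.
move=> Pu H i Hi.
have P1 : 0 <= y i.
  apply: (@minprinc u y Pu _ i Hi) => k Hk; rewrite H //.
have P2 : 0 <= -1 * y i + 0 * y i.
  apply: (@minprinc u (fun k => -1 * y k + 0 * y k) Pu _ i Hi) => k Hk.
  rewrite opx_lin H //; lra.
lra.
Qed.

Lemma opx_ext u x y i : (forall k, (k <= n)%N -> x k = y k) -> (i <= n)%N ->
  opx u x i = opx u y i.
Proof.
move=> E Hi; rewrite /opx E // (E i.-1); last by lia.
case: (ltnP i n) => Hl; first by rewrite E.
have -> : i = n by lia.
by rewrite up_n !mul0r.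
Qed.

Lemma Munit u : policy n u -> (alpha%:M - gen n lam mu u) \in unitmx.
Proof.
move=> Pu; apply: unit_of_ker => x Hx.
have Z := @minprinc0 u (fun k => x (inord k) 0) Pu.
apply/matrixP => i j; rewrite (ord1 j) mxE.
have -> : i = inord i by rewrite inord_val.
apply: Z; last by have := ltn_ord i.
move=> k Hk; have <- : (inord k : 'I_n.+1) = k :> nat by rewrite inordK.
by rewrite -M_mul Hx mxE.
Qed.

Lemma solve u f : policy n u -> forall i, (i <= n)%N ->
  opx u (disc_measure n lam mu alpha u f) i = f i.
Proof.
move=> Pu i Hi.
have U := Munit _ Pu.
have E : (alpha%:M - gen n lam mu u) *m (invmx (alpha%:M - gen n lam mu u) *m \col_(k < n.+1) f k)
   = \col_(k < n.+1) f k by rewrite mulmxA mulmxV // mul1mx.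
move/matrixP: E => /(_ (inord i) 0); rewrite M_mul mxE inordK //.
Qed.


Lemma opxB u x y i : opx u (fun k => x k - y k) i = opx u x i - opx u y i.
Proof. rewrite /opx; ring. Qed.

Lemma opx_switch u u' x i :
  opx u x i = opx u' x i + (up u i - up u' i) * (x i - x i.+1).
Proof. rewrite /opx; ring. Qed.

Lemma policy_Sactive S : policy n (Sactive R S).
Proof. by move=> i _; rewrite /Sactive; case: (S i) => /=; rewrite ?lexx ?ler01. Qed.

Lemma shut_Sactive S i : (i < n)%N -> shut n (Sactive R S) i = if S i then 1 else 0.
Proof. by move=> Hi; rewrite /shut leqNgt Hi. Qed.

Definition T m := Sactive R (Sk n m.+1).

Lemma up_T m i : (m <= n)%N -> (i <= n)%N -> up (T m) i = if (i < m)%N then lam i else 0.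
Proof.
move=> Hm Hi; case: (ltnP i n) => Hl; last first.
  have -> : i = n by lia.
  by rewrite up_n ltnNge Hm.
rewrite /up shut_Sactive // /Sk /= Hl andbT; case: (ltnP i m) => Him /=.
  ring.
ring.
Qed.

Lemma solve_v S i : (i <= n)%N -> opx (Sactive R S) (vS n lam mu h alpha S) i = h i.
Proof. by move=> Hi; apply: solve => //; exact: policy_Sactive. Qed.

Lemma solve_b S i : (i <= n)%N ->
  opx (Sactive R S) (bS n lam mu alpha S) i = lam i * shut n (Sactive R S) i.
Proof. by move=> Hi; apply: (solve _ (fun k => lam k * shut n (Sactive R S) k)) => //; exact: policy_Sactive. Qed.

Lemma diff_id u x f (nu : R) k : (k < n)%N -> (forall i, (i <= n)%N -> opx u x i = f i) ->
  (alpha + up u k + dn k.+1) * (x k.+1 - x k - nu) - up u k.+1 * (x k.+2 - x k.+1 - nu)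
   - dn k * (x k - x k.-1 - nu)
  = (f k.+1 - f k) - nu * (alpha + up u k + dn k.+1 - up u k.+1 - dn k).
Proof.
move=> Hk Hx; rewrite -(Hx k.+1 Hk) -(Hx k (ltnW Hk)) /opx /=; ring.
Qed.

Definition Dsys (upf sg D : nat -> R) := forall k, (k < n)%N ->
  (alpha + upf k + dn k.+1) * D k.+1 - upf k.+1 * D k.+2 - dn k * D k = sg k.+1.

Definition pT m i := vS n lam mu h alpha (Sk n m.+1) i - vS n lam mu h alpha (Sk n m.+1) i.-1.
Definition sT m i := bS n lam mu alpha (Sk n m.+1) i - bS n lam mu alpha (Sk n m.+1) i.-1 - 1.
Definition gam i := alpha + Dd lam mu i.
Definition g (nu : R) i := Dh h i - nu * gam i.
Definition E m (nu : R) i := pT m i + nu * sT m i.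

Lemma Dsys_p m : Dsys (up (T m)) (Dh h) (pT m).
Proof.
move=> k Hk; have := @diff_id (T m) (vS n lam mu h alpha (Sk n m.+1)) h 0 k Hk (solve_v _).
rewrite /pT /Dh /=; move=> H; apply: (@eq_by R _ _ _ _ H); ring.
Qed.

Lemma Dsys_s m : Dsys (up (T m)) (fun i => - gam i) (sT m).
Proof.
move=> k Hk; have := @diff_id (T m) (bS n lam mu alpha (Sk n m.+1)) _ 1 k Hk (solve_b _).
rewrite /sT /gam /Dd /dd /=; move=> H.
have -> : - (alpha + (mu0 mu k.+1 - lam k.+1 - (mu0 mu k - lam k))) =
  lam k.+1 * shut n (T m) k.+1 - lam k * shut n (T m) k -
    1 * (alpha + up (T m) k + dn k.+1 - up (T m) k.+1 - dn k).
  by rewrite /up /dn; ring.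
apply: (@eq_by R _ _ _ _ H); ring.
Qed.

Lemma Dsys_E m nu : Dsys (up (T m)) (g nu) (E m nu).
Proof.
move=> k Hk; have P := Dsys_p m k Hk; have S := Dsys_s m k Hk.
rewrite /g /E; apply: (@eq_by2 R _ _ _ _ _ _ nu P S); ring.
Qed.


Set Implicit Arguments.
Unset Strict Implicit.
Hypothesis Hn : (1 <= n)%N.
Hypothesis Hd : forall i, (1 <= i <= n - 1)%N -> 0 <= Dd lam mu i.+1 <= Dd lam mu i.
Hypothesis Hd1 : 0 < Dd lam mu 1.
Hypothesis Hh : forall i, (1 <= i <= n - 1)%N -> 0 <= Dh h i <= Dh h i.+1.

Lemma dnS i : dn i.+1 = mu i.+1.
Proof. by []. Qed.

Lemma mu_pos i : (1 <= i <= n)%N -> 0 < mu i.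
Proof. exact: Hmu. Qed.

Lemma gam_pos i : (1 <= i <= n)%N -> 0 < gam i.
Proof.
move=> /andP [H1 H2]; rewrite /gam.
case: i H1 H2 => [//|[|i]] _ H2; first (move: Hd1 Ha; lra).
have /andP [D1 _] := @Hd i.+1 (ltac:(apply/andP; split; lia)); move: Ha; lra.
Qed.

Lemma gam_dec i : (1 <= i <= n - 1)%N -> gam i.+1 <= gam i.
Proof. move=> Hi; have /andP [_ D] := Hd Hi; rewrite /gam; lra. Qed.

Fixpoint Kf i := match i with
  | 0 => 1
  | i'.+1 => alpha + lam i' + mu i'.+1 - dn i' * lam i' / Kf i' end.

Fixpoint af (sg : nat -> R) i := match i with
  | 0 => 0
  | i'.+1 => (sg i'.+1 + dn i' * af sg i') / Kf i'.+1 end.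

Lemma Kf_prop i : (1 <= i <= n)%N -> lam i < Kf i /\ alpha + mu i <= Kf i.
Proof.
elim: i => [//|i IH] /andP [_ Hi].
case: i IH Hi => [|i] IH Hi.
  rewrite /= dn0 !mul0r subr0.
  have Ha0 := Ha; have L0 := Hlam 0 (leq0n n); have := Hd1; rewrite /Dd /dd /mu0 /=; lra.
have [IH1 IH2] := IH (ltac:(apply/andP; split; lia)).
have Ha0 := Ha; have Li := Hlam i.+1 (ltac:(lia)); have Mi := @mu_pos i.+1 (ltac:(apply/andP; split; lia)).
have G := @gam_pos i.+2 (ltac:(apply/andP; split; lia)).
move: G; rewrite /gam /Dd /dd /mu0 /= => G.
set K := Kf i.+1 in IH1 IH2 *.
have Kp : 0 < K by lra.
have q1 : lam i.+1 / K < 1 by rewrite ltr_pdivrMr // mul1r.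
have q2 : mu i.+1 / K < 1 by rewrite ltr_pdivrMr // mul1r; lra.
have q0 : 0 < lam i.+1 / K by apply: divr_gt0.
rewrite dnS.
have E1 : mu i.+1 * lam i.+1 / K = mu i.+1 * (lam i.+1 / K) by rewrite mulrA.
have E2 : mu i.+1 * lam i.+1 / K = lam i.+1 * (mu i.+1 / K) by rewrite mulrAC mulrC mulrA.
split.
  rewrite E1; nra.
rewrite E2; nra.
Qed.

Lemma Kf_pos i : (1 <= i <= n)%N -> 0 < Kf i.
Proof.
move=> Hi; have [_ K] := Kf_prop Hi; have := mu_pos Hi; move: Ha; lra.
Qed.

Lemma Kf_neq0 i : (1 <= i <= n)%N -> Kf i != 0.
Proof. by move=> Hi; rewrite gt_eqF // Kf_pos. Qed.

Lemma af_N sg i : af (fun k => - sg k) i = - af sg i.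
Proof. elim: i => [|i IH] /=; first by rewrite oppr0. rewrite IH; ring. Qed.

Lemma af_g nu i : af (g nu) i = af (Dh h) i - nu * af gam i.
Proof. elim: i => [|i IH] /=; first by ring. rewrite IH /g; ring. Qed.

Lemma elim_sys upf m sg D : (1 <= m <= n)%N -> (forall i, (i < m)%N -> upf i = lam i) ->
  Dsys upf sg D -> forall i, (1 <= i <= m)%N -> D i = af sg i + upf i / Kf i * D i.+1.
Proof.
move=> Hm Hup HD; elim=> [//|i IH] /andP [_ Hi].
case: i IH Hi => [|i] IH Hi.
  have H := HD 0%N (ltac:(lia)).
  rewrite Hup in H; last by lia.
  rewrite dn0 dnS in H.
  have K1 := Kf_neq0 (ltac:(apply/andP; split; lia) : (1 <= 1 <= n)%N).
  move: K1; rewrite /= dn0 !mul0r subr0 => K1.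
  rewrite -H; field; exact: K1.
have IH' := IH (ltac:(apply/andP; split; lia)).
rewrite Hup in IH'; last by lia.
have H := HD i.+1 (ltac:(lia)).
rewrite Hup in H; last by lia.
rewrite dnS in H.
have K1 := Kf_neq0 (ltac:(apply/andP; split; lia) : (1 <= i.+1 <= n)%N).
have K2 := Kf_neq0 (ltac:(apply/andP; split; lia) : (1 <= i.+2 <= n)%N).
have EK : Kf i.+2 = alpha + lam i.+1 + mu i.+2 - dn i.+1 * lam i.+1 / Kf i.+1 by [].
have Ea : af sg i.+2 = (sg i.+2 + dn i.+1 * af sg i.+1) / Kf i.+2 by [].
have Eb : af sg i.+1 = D i.+1 - lam i.+1 / Kf i.+1 * D i.+2 by rewrite IH'; ring.
have Ec : sg i.+2 + dn i.+1 * af sg i.+1 = Kf i.+2 * D i.+2 - upf i.+2 * D i.+3.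
  rewrite Eb -H EK; field; exact: K1.
rewrite Ea Ec; field; exact: K2.
Qed.

Lemma elim_top upf m sg D : (1 <= m <= n)%N -> (forall i, (i < m)%N -> upf i = lam i) ->
  upf m = 0 -> Dsys upf sg D -> D m = af sg m.
Proof.
move=> Hm Hup H0 HD; rewrite (elim_sys Hm Hup HD); last by lia.
by rewrite H0 mul0r mul0r addr0.
Qed.

Lemma neg_below upf m sg D : (1 <= m <= n)%N -> (forall i, (i < m)%N -> upf i = lam i) ->
  upf m = 0 -> Dsys upf sg D -> (forall i, (1 <= i <= m)%N -> af sg i < 0) ->
  forall i, (1 <= i <= m)%N -> D i < 0.
Proof.
move=> Hm Hup H0 HD Ha' .
suff S : forall t, (t < m)%N -> D (m - t)%N < 0.
  move=> i Hi; have -> : i = (m - (m - i))%N by lia.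
  apply: S; lia.
elim=> [|t IH] Ht.
  rewrite subn0 (elim_top Hm Hup H0 HD); apply: Ha'; lia.
have Hi : (1 <= m - t.+1 <= m)%N by lia.
rewrite (elim_sys Hm Hup HD Hi) Hup; last by lia.
have -> : (m - t.+1).+1 = (m - t)%N by lia.
have A := Ha' _ Hi; have B := IH (ltnW Ht).
have L := Hlam (m - t.+1) (ltac:(lia)).
have K := Kf_pos (ltac:(apply/andP; split; lia) : (1 <= m - t.+1 <= n)%N).
have C : 0 < lam (m - t.+1) / Kf (m - t.+1) by apply: divr_gt0.
nra.
Qed.

Lemma fwd upf sg D k : upf k = 0 -> upf k.+1 = 0 -> Dsys upf sg D -> (k < n)%N ->
  (alpha + mu k.+1) * D k.+1 = sg k.+1 + dn k * D k.
Proof.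
move=> U0 U1 HD Hk; have H := HD k Hk; rewrite U0 U1 dnS in H.
apply: (@eq_by R _ _ _ _ H); ring.
Qed.


Notation nu := (nuidx n lam mu h alpha).

Lemma upT_lt m i : (m <= n)%N -> (i < m)%N -> up (T m) i = lam i.
Proof. by move=> Hm Hi; rewrite up_T // ?Hi //; lia. Qed.

Lemma upT_ge m i : (m <= n)%N -> (m <= i <= n)%N -> up (T m) i = 0.
Proof. by move=> Hm /andP [H1 H2]; rewrite up_T // ltnNge H1. Qed.

Lemma B_pos i : (1 <= i <= n)%N -> 0 < af gam i.
Proof.
elim: i => [//|i IH] /andP [_ Hi].
have Hg := @gam_pos i.+1 (ltac:(apply/andP; split; lia)).
have HK := @Kf_pos i.+1 (ltac:(apply/andP; split; lia)).
have -> : af gam i.+1 = (gam i.+1 + dn i * af gam i) / Kf i.+1 by [].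
apply: divr_gt0 => //.
case: i IH Hi Hg HK => [|i] IH Hi Hg HK; first by rewrite dn0 mul0r addr0.
have := IH (ltac:(apply/andP; split; lia)); have := @mu_pos i.+1 (ltac:(apply/andP; split; lia)).
rewrite dnS; nra.
Qed.

Lemma sT_top m : (1 <= m <= n)%N -> sT m m = - af gam m.
Proof.
move=> Hm; rewrite -af_N.
apply: (@elim_top (up (T m)) m _ _ Hm) => //.
- by move=> i Hi; apply: upT_lt => //; lia.
- by apply: upT_ge; lia.
- exact: Dsys_s.
Qed.

Lemma wS_eq m i : wS n lam mu alpha (Sk n m.+1) i = - lam i * sT m i.+1.
Proof. rewrite /wS /sT /=; ring. Qed.

Lemma nu_rel j : (j.+1 < n)%N ->
  wS n lam mu alpha (Sk n j.+2) j / rho lam mu j = mu j.+1 * af gam j.+1.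
Proof.
move=> Hj; rewrite wS_eq sT_top; last by apply/andP; split; lia.
have L := Hlam j (ltac:(lia)); have M := @mu_pos j.+1 (ltac:(apply/andP; split; lia)).
rewrite /rho; field; apply/andP; split; rewrite gt_eqF //.
Qed.

Lemma nuS j : nu j.+1 = nu j + g (nu j) j.+2 /
   (gam j.+2 + wS n lam mu alpha (Sk n j.+2) j / rho lam mu j).
Proof. by []. Qed.

Lemma A_eq i : (1 <= i <= n)%N -> af (Dh h) i = af gam i * nu i.-1.
Proof.
elim: i => [//|i IH] /andP [_ Hi].
case: i IH Hi => [|i] IH Hi.
  have K1 := @Kf_neq0 1 (ltac:(apply/andP; split; lia)).
  have G1 := @gam_pos 1 (ltac:(apply/andP; split; lia)).
  rewrite /= /gam in K1 G1 *; rewrite dn0 !mul0r !addr0; field.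
  by rewrite dn0 !mul0r subr0 in K1; rewrite K1 gt_eqF.
have K2 := @Kf_neq0 i.+2 (ltac:(apply/andP; split; lia)).
have G2 := @gam_pos i.+2 (ltac:(apply/andP; split; lia)).
have B1 := @B_pos i.+1 (ltac:(apply/andP; split; lia)).
have M1 := @mu_pos i.+1 (ltac:(apply/andP; split; lia)).
have Ea : af (Dh h) i.+2 = (Dh h i.+2 + dn i.+1 * af (Dh h) i.+1) / Kf i.+2 by [].
have Eb : af gam i.+2 = (gam i.+2 + dn i.+1 * af gam i.+1) / Kf i.+2 by [].
rewrite Ea Eb IH; last by apply/andP; split; lia.
rewrite (_ : i.+2.-1 = i.+1) // (_ : i.+1.-1 = i) // nuS nu_rel; last by lia.
rewrite dnS /g.
have D : gam i.+2 + mu i.+1 * af gam i.+1 != 0 by rewrite gt_eqF //; nra.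
field; by apply/andP; split.
Qed.

Lemma af_g_eq v i : (1 <= i <= n)%N -> af (g v) i = af gam i * (nu i.-1 - v).
Proof. by move=> Hi; rewrite af_g A_eq //; ring. Qed.

Lemma g_cross v i : (1 <= i <= n - 1)%N -> 0 <= g v i -> 0 <= g v i.+1.
Proof.
move=> Hi; have /andP [H0 H1] := Hh Hi; have Gd := gam_dec Hi.
have Gp := @gam_pos i.+1 (ltac:(apply/andP; split; lia)).
rewrite /g => H; case: (lerP 0 v) => Hv; nra.
Qed.

Lemma nu_step j : (j.+1 < n)%N -> 0 <= g (nu j) j.+1 -> nu j <= nu j.+1.
Proof.
move=> Hj H; rewrite nuS nu_rel //.
have H2 := @g_cross (nu j) j.+1 (ltac:(apply/andP; split; lia)) H.
have G2 := @gam_pos j.+2 (ltac:(apply/andP; split; lia)).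
have B1 := @B_pos j.+1 (ltac:(apply/andP; split; lia)).
have M1 := @mu_pos j.+1 (ltac:(apply/andP; split; lia)).
have D : 0 <= g (nu j) j.+2 / (gam j.+2 + mu j.+1 * af gam j.+1).
  apply: divr_ge0 => //; nra.
lra.
Qed.

Lemma af_zero v i : (1 <= i <= n)%N -> af (g v) i = 0 -> g v i + dn i.-1 * af (g v) i.-1 = 0.
Proof.
case: i => [//|i] Hi.
have K := @Kf_neq0 i.+1 Hi.
have -> : af (g v) i.+1 = (g v i.+1 + dn i * af (g v) i) / Kf i.+1 by [].
by move/eqP; rewrite mulf_eq0 invr_eq0 (negbTE K) orbF => /eqP.
Qed.

Lemma nu_mono j : (j.+1 < n)%N -> nu j <= nu j.+1.
Proof.
elim: j => [|j IH] Hj.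
  apply: nu_step => //.
  have Z : af (g (nu 0)) 1 = 0.
    by rewrite af_g_eq /= ?subrr ?mulr0 //; apply/andP; split; lia.
  have := @af_zero (nu 0) 1 (ltac:(apply/andP; split; lia)) Z.
  by rewrite /= dn0 mul0r addr0 => ->.
apply: nu_step => //.
have Z : af (g (nu j.+1)) j.+2 = 0.
  rewrite af_g_eq; last by apply/andP; split; lia.
  by rewrite subrr mulr0.
have := @af_zero (nu j.+1) j.+2 (ltac:(apply/andP; split; lia)) Z.
move=> E0; rewrite af_g_eq in E0; last by apply/andP; split; lia.
rewrite [dn _]/= in E0.
have I := IH (ltac:(lia)).
have B1 := @B_pos j.+1 (ltac:(apply/andP; split; lia)).
have M1 := @mu_pos j.+1 (ltac:(apply/andP; split; lia)).
rewrite dnS in E0; change (j.+2.-1) with j.+1 in E0; change (j.+2.-2) with j in E0; have P : 0 <= af gam j.+1 * (nu j.+1 - nu j) by apply: mulr_ge0; lra.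
have P2 : 0 <= mu j.+1 * (af gam j.+1 * (nu j.+1 - nu j)) by apply: mulr_ge0; lra.
change (j.+1.-1) with j in E0; nra.
Qed.

Lemma nu_mono_le i j : (i <= j)%N -> (j < n)%N -> nu i <= nu j.
Proof.
elim: j => [|j IH] Hij Hj; first by have -> : i = 0%N by lia.
case: (ltnP i j.+1) => Hl; last by have -> : i = j.+1 by lia.
apply: le_trans (IH (ltac:(lia)) (ltac:(lia))) (nu_mono Hj).
Qed.


Lemma E_top m v : (m < n)%N -> (alpha + mu m.+1) * E m v m.+1 = Kf m.+1 * af (g v) m.+1.
Proof.
move=> Hm.
have F := @fwd (up (T m)) (g v) (E m v) m (@upT_ge m m (ltnW Hm) (ltac:(apply/andP; split; lia)))
  (@upT_ge m m.+1 (ltnW Hm) (ltac:(apply/andP; split; lia))) (@Dsys_E m v) Hm.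
have Af : af (g v) m.+1 = (g v m.+1 + dn m * af (g v) m) / Kf m.+1 by [].
have K := @Kf_neq0 m.+1 (ltac:(apply/andP; split; lia)).
have Ed : dn m * E m v m = dn m * af (g v) m.
  case: m Hm F Af K => [|m] Hm F Af K; first by rewrite dn0 !mul0r.
  congr (_ * _); apply: (@elim_top (up (T m.+1)) m.+1 _ _ (ltac:(apply/andP; split; lia))).
  - by move=> i Hi; apply: upT_lt => //; lia.
  - by apply: upT_ge; lia.
  - exact: Dsys_E.
rewrite F Ed Af; field; exact: K.
Qed.

Lemma E_neg m v : (1 <= m <= n)%N -> nu m.-1 < v -> forall i, (1 <= i <= m)%N -> E m v i < 0.
Proof.
move=> Hm Hv; apply: (@neg_below (up (T m)) m (g v)) => //.
- by move=> i Hi; apply: upT_lt => //; lia.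
- by apply: upT_ge; lia.
- exact: Dsys_E.
move=> i Hi; rewrite af_g_eq; last by lia.
have B := @B_pos i (ltac:(lia)).
have N := @nu_mono_le i.-1 m.-1 (ltac:(lia)) (ltac:(lia)).
nra.
Qed.

Lemma E_nonneg m v : (m < n)%N -> v <= nu m -> ((1 <= m)%N -> nu m.-1 < v) ->
  forall i, (m < i <= n)%N -> 0 <= E m v i.
Proof.
move=> Hm Hv Hv'.
have Mp := @mu_pos m.+1 (ltac:(apply/andP; split; clia)).
have Ha0 := Ha.
have T1 : 0 <= E m v m.+1.
  have Et := E_top v Hm; rewrite af_g_eq /= in Et; last by clia.
  have B := @B_pos m.+1 (ltac:(clia)).
  have K := @Kf_pos m.+1 (ltac:(clia)).
  have P : 0 <= Kf m.+1 * (af gam m.+1 * (nu m - v)).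
    by apply: mulr_ge0; [lra| apply: mulr_ge0; lra].
  rewrite -Et in P.
  by move: P; rewrite pmulr_rge0 //; lra.
have F := @fwd (up (T m)) (g v) (E m v) m (@upT_ge m m (ltnW Hm) (ltac:(apply/andP; split; clia)))
  (@upT_ge m m.+1 (ltnW Hm) (ltac:(apply/andP; split; clia))) (@Dsys_E m v) Hm.
have T2 : 0 <= g v m.+1.
  have Dm : dn m * E m v m <= 0.
    case: m Hm Hv Hv' Mp T1 F => [|m] Hm Hv Hv' Mp T1 F; first by rewrite dn0 mul0r.
    have := @E_neg m.+1 v (ltac:(apply/andP; split; clia)) (Hv' erefl) m.+1 (ltac:(clia)).
    have := @mu_pos m.+1 (ltac:(apply/andP; split; clia)); rewrite dnS; nra.
  nra.
suff S : forall i, (m < i <= n)%N -> 0 <= g v i /\ 0 <= E m v i by move=> i /S [].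
elim=> [//|i IH] Hi.
case: (eqVneq i m) => [->|Him]; first by split.
have [G1 E1] := IH (ltac:(move: Hi Him; clear; move=> /andP [? ?] /eqP ?; apply/andP; split; clia)).
clear IH Hv'; move/eqP: Him => Him.
have G2 := @g_cross v i (ltac:(apply/andP; split; clia)) G1.
have h1 : (m <= i <= n)%N by move: Hi Him; clear; move=> /andP [? ?] /eqP ?; apply/andP; split; clia.
have h2 : (m <= i.+1 <= n)%N by move: Hi Him; clear; move=> /andP [? ?] /eqP ?; apply/andP; split; clia.
have h3 : (i < n)%N by move: Hi; clear; move=> /andP [? ?]; clia.
have F2 := @fwd (up (T m)) (g v) (E m v) i (@upT_ge m i (ltnW Hm) h1)
  (@upT_ge m i.+1 (ltnW Hm) h2) (@Dsys_E m v) h3.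
have Mi := @mu_pos i (ltac:(apply/andP; split; clia)).
have Mi1 := @mu_pos i.+1 (ltac:(apply/andP; split; clia)).
case: i Hi Him G1 E1 G2 F2 Mi Mi1 h1 h2 h3 => [|i] Hi Him G1 E1 G2 F2 Mi Mi1 h1 h2 h3.
  by move: Hi Him; clear; move=> /andP [? ?] ?; lia.
rewrite dnS in F2.
split => //.
have P : 0 <= (alpha + mu i.+2) * E m v i.+2 by rewrite F2; nra.
by move: P; rewrite pmulr_rge0 //; lra.
Qed.

Lemma E_c m j : (m <= j)%N -> (j < n)%N -> E m (nu j) j.+1 <= 0.
Proof.
move=> Hmj Hj.
have Ha0 := Ha.
have Aneg : forall i, (1 <= i <= j.+1)%N -> af (g (nu j)) i <= 0.
  move=> i Hi; rewrite af_g_eq; last by clia.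
  have B := @B_pos i (ltac:(clia)).
  have N := @nu_mono_le i.-1 j (ltac:(clia)) Hj.
  nra.
suff S : forall i, (m < i <= j.+1)%N -> E m (nu j) i <= af (g (nu j)) i.
  apply: le_trans (S j.+1 (ltac:(clia))) _.
  by rewrite af_g_eq /= ?subrr ?mulr0 //; clia.
elim=> [//|i IH] Hi.
have A1 := Aneg i.+1 (ltac:(clia)).
have [_ KK] := @Kf_prop i.+1 (ltac:(clia)).
have Mi1 := @mu_pos i.+1 (ltac:(apply/andP; split; clia)).
have P : (Kf i.+1 - (alpha + mu i.+1)) * af (g (nu j)) i.+1 <= 0.
  by apply: mulr_ge0_le0; lra.
have Af : Kf i.+1 * af (g (nu j)) i.+1 = g (nu j) i.+1 + dn i * af (g (nu j)) i.
  have K := @Kf_neq0 i.+1 (ltac:(clia)).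
  have -> : af (g (nu j)) i.+1 = (g (nu j) i.+1 + dn i * af (g (nu j)) i) / Kf i.+1 by [].
  field; exact: K.
suff Q : (alpha + mu i.+1) * (E m (nu j) i.+1 - af (g (nu j)) i.+1) <= 0.
  by move: Q; rewrite pmulr_rle0 ?subr_le0 //; lra.
case: (eqVneq i m) => [Eim|Him].
  rewrite Eim in Af P *; have Et := E_top (nu j) (ltac:(clia) : (m < n)%N).
  nra.
have IH' := IH (ltac:(clia)).
have F2 := @fwd (up (T m)) (g (nu j)) (E m (nu j)) i
  (@upT_ge m i (ltac:(clia)) (ltac:(apply/andP; split; clia)))
  (@upT_ge m i.+1 (ltac:(clia)) (ltac:(apply/andP; split; clia))) (@Dsys_E m (nu j)) (ltac:(clia)).
case: i IH Hi Him A1 KK Mi1 P Af IH' F2 => [|i] IH Hi Him A1 KK Mi1 P Af IH' F2; first by clia.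
have Mi := @mu_pos i.+1 (ltac:(apply/andP; split; clia)).
rewrite dnS in Af F2.
nra.
Qed.

Lemma E_c_eq j : (j < n)%N -> E j (nu j) j.+1 = 0.
Proof.
move=> Hj; have Et := E_top (nu j) Hj.
rewrite af_g_eq /= ?subrr ?mulr0 ?mulr0 in Et; last by clia.
have Mp := @mu_pos j.+1 (ltac:(apply/andP; split; clia)).
have Ha0 := Ha.
move/eqP: Et; rewrite mulf_eq0 => /orP [/eqP|/eqP //]; lra.
Qed.

Lemma sT_neg m i : (m <= n)%N -> (1 <= i <= n)%N -> sT m i < 0.
Proof.
move=> Hm; elim: i => [//|i IH] Hi.
case: (leqP i.+1 m) => Him.
  apply: (@neg_below (up (T m)) m (fun k => - gam k)) => //.
  - clia.
  - by move=> k Hk; apply: upT_lt => //; clia.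
  - by apply: upT_ge; clia.
  - exact: Dsys_s.
  - move=> k Hk; rewrite af_N; have := @B_pos k (ltac:(clia)); lra.
have F := @fwd (up (T m)) _ (sT m) i (@upT_ge m i Hm (ltac:(apply/andP; split; clia)))
  (@upT_ge m i.+1 Hm (ltac:(apply/andP; split; clia))) (@Dsys_s m) (ltac:(clia)).
have G := @gam_pos i.+1 (ltac:(clia)).
have M := @mu_pos i.+1 (ltac:(clia)).
have Ha0 := Ha.
have Dm : dn i * sT m i <= 0.
  case: i IH Hi Him F G M => [|i] IH Hi Him F G M; first by rewrite dn0 mul0r.
  have := IH (ltac:(clia)); have := @mu_pos i.+1 (ltac:(clia)); rewrite dnS; nra.
have P : (alpha + mu i.+1) * sT m i.+1 < 0 by rewrite F; lra.
by move: P; rewrite pmulr_rlt0 //; lra.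
Qed.


Lemma opx_lin2 u x y c i : opx u (fun k => x k + c * y k) i = opx u x i + c * opx u y i.
Proof. rewrite /opx; ring. Qed.

Lemma opxN u x i : opx u (fun k => - x k) i = - opx u x i.
Proof. rewrite /opx; ring. Qed.

Lemma opx0 u i : opx u (fun _ => 0) i = 0.
Proof. rewrite /opx; ring. Qed.

Lemma opx_C u v i : policy n u -> (i <= n)%N ->
  opx u (fun k => charge_obj n lam mu h alpha v u k) i = h i + v * (lam i * shut n u i).
Proof.
move=> Pu Hi; rewrite /charge_obj opx_lin2; congr (_ + _ * _).
  exact: (solve u h Pu i Hi).
exact: (solve u (fun k => lam k * shut n u k) Pu i Hi).
Qed.

Lemma CT_E m v i : E m v i.+1 =
  charge_obj n lam mu h alpha v (T m) i.+1 - charge_obj n lam mu h alpha v (T m) i - v.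
Proof. rewrite /E /pT /sT /charge_obj /vS /bS /T /=; ring. Qed.

Lemma opx_gap u m v k : policy n u -> (m <= n)%N -> (k <= n)%N ->
  opx u (fun i => charge_obj n lam mu h alpha v u i - charge_obj n lam mu h alpha v (T m) i) k
  = (up u k - up (T m) k) * E m v k.+1.
Proof.
move=> Pu Hm Hk.
rewrite opxB opx_C // (opx_switch u (T m)) opx_C //; last exact: policy_Sactive.
rewrite CT_E /up; ring.
Qed.

Lemma T_opt m v : (m <= n)%N -> (forall i, (1 <= i <= m)%N -> E m v i < 0) ->
  (forall i, (m < i <= n)%N -> 0 <= E m v i) -> charge_optimal n lam mu h alpha v (T m).
Proof.
move=> Hm Hneg Hpos; split; first exact: policy_Sactive.
move=> u' Pu' i Hi.
have := @minprinc u' (fun k => charge_obj n lam mu h alpha v u' k - charge_obj n lam mu h alpha v (T m) k) Pu' _ i Hi.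
rewrite subr_ge0; apply.
move=> k Hk; rewrite opx_gap //.
case: (ltnP k m) => Hkm.
  rewrite upT_lt //; have := up_le _ _ Pu' Hk; have := Hneg k.+1 (ltac:(clia)); nra.
case: (ltnP k n) => Hkn.
  rewrite (@upT_ge m k Hm); last by clia.
  have := up_ge0 _ _ Pu' Hk; have := Hpos k.+1 (ltac:(clia)); nra.
have -> : k = n by move: Hk Hkn; clear; lia.
by rewrite !up_n subrr mul0r.
Qed.

Lemma thresh v : exists m, [/\ (m <= n)%N, forall j, (j < n)%N -> (v <= nu j) = (m <= j)%N
  & (1 <= m)%N -> nu m.-1 < v].
Proof.
have ex : exists j, (n <= j)%N || (v <= nu j) by exists n; rewrite leqnn.
case: (ex_minnP ex) => m Pm Hmin.
have Hmn : (m <= n)%N by apply: Hmin; rewrite leqnn.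
exists m; split => //.
  move=> j Hj; apply/idP/idP => H.
    by apply: Hmin; rewrite H orbT.
  have Hmn' : (m < n)%N by clia.
  move: Pm; rewrite leqNgt Hmn' /= => Pm.
  exact: le_trans Pm (nu_mono_le H Hj).
move=> H1; rewrite ltNge; apply/negP => H.
have := Hmin m.-1 (ltac:(by rewrite H orbT)); clia.
Qed.

Lemma part_b v : (forall j, (j < n)%N -> (shut_optimal n lam mu h alpha v j <-> v <= nu j))
  /\ exists2 k, (1 <= k <= n.+1)%N & forall j, (j < n)%N -> (v <= nu j) = Sk n k j.
Proof.
have [m [Hm Hj Hm1]] := thresh v.
have Topt : charge_optimal n lam mu h alpha v (T m).
  apply: T_opt => //.
    move=> i Hi; apply: (@E_neg m v) => //; first clia.
    by apply: Hm1; clia.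
  move=> i Hi; apply: (@E_nonneg m v) => //; first clia.
  by rewrite Hj //; clia.
split; last first.
  exists m.+1; first clia.
  by move=> j Hjn; rewrite Hj // /Sk /= Hjn andbT.
move=> j Hjn; split.
  case=> u [[Pu Hopt] Huj].
  rewrite Hj // leqNgt; apply/negP => Hjm.
  have HEq : forall k, (k <= n)%N ->
      charge_obj n lam mu h alpha v u k - charge_obj n lam mu h alpha v (T m) k = 0.
    move=> k Hk; apply/eqP; rewrite subr_eq0 eq_le (Hopt _ (policy_Sactive _) k Hk) /=.
    exact: (Topt.2 u Pu k Hk).
  have Z := @opx_gap u m v j Pu Hm (ltnW Hjn).
  rewrite (@opx_ext u _ (fun _ => 0) j HEq (ltnW Hjn)) opx0 in Z.
  have U0 : up u j = 0 by rewrite /up /shut leqNgt Hjn /= Huj subrr mulr0.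
  rewrite U0 upT_lt // in Z.
  have EN := @E_neg m v (ltac:(clia)) (Hm1 (ltac:(clia))) j.+1 (ltac:(clia)).
  have L := Hlam j (ltnW Hjn).
  nra.
move=> Hv; exists (T m); split => //.
have Hmj : (m <= j)%N by rewrite -Hj.
by rewrite /T /Sactive /Sk /= Hmj Hjn.
Qed.

Lemma ratio_eq m j : (m <= j)%N -> (j < n)%N ->
  (vS n lam mu h alpha (setD1n (Sk n m.+1) j) j - vS n lam mu h alpha (Sk n m.+1) j) /
  (bS n lam mu alpha (Sk n m.+1) j - bS n lam mu alpha (setD1n (Sk n m.+1) j) j)
  = - pT m j.+1 / sT m j.+1.
Proof.
move=> Hmj Hjn.
have PQ := policy_Sactive (setD1n (Sk n m.+1) j).
have PP := policy_Sactive (Sk n m.+1).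
have Hdel : forall i, (i <= n)%N ->
    up (Sactive R (setD1n (Sk n m.+1) j)) i - up (Sactive R (Sk n m.+1)) i
    = if i == j then lam j else 0.
  move=> i Hi; case: (ltnP i n) => Hin.
    rewrite /up !shut_Sactive // /setD1n /Sk /=.
    case: (eqVneq i j) => [->|Hij] /=.
      by rewrite ?eqxx /= ?andbF ?Hmj ?Hjn /=; ring.
    by rewrite andbT; case: (_ && _); ring.
  have -> : i = n by clia.
  have -> : (n == j) = false by apply/negbTE; clia.
  by rewrite !up_n subrr.
have Ey : forall i, (i <= n)%N ->
    opx (Sactive R (setD1n (Sk n m.+1) j))
      (fun k => vS n lam mu h alpha (setD1n (Sk n m.+1) j) k - vS n lam mu h alpha (Sk n m.+1) k) i
    = (up (Sactive R (setD1n (Sk n m.+1) j)) i - up (Sactive R (Sk n m.+1)) i) * pT m i.+1.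
  move=> i Hi; rewrite opxB solve_v // (opx_switch _ (Sactive R (Sk n m.+1))) solve_v //.
  rewrite /pT /=; ring.
have Ez : forall i, (i <= n)%N ->
    opx (Sactive R (setD1n (Sk n m.+1) j))
      (fun k => bS n lam mu alpha (setD1n (Sk n m.+1) j) k - bS n lam mu alpha (Sk n m.+1) k) i
    = (up (Sactive R (setD1n (Sk n m.+1) j)) i - up (Sactive R (Sk n m.+1)) i) * sT m i.+1.
  move=> i Hi; rewrite opxB solve_b // (opx_switch _ (Sactive R (Sk n m.+1))) solve_b //.
  rewrite /sT /up /=; ring.
set p := pT m j.+1; set s := sT m j.+1.
set vQ := vS n lam mu h alpha (setD1n (Sk n m.+1) j).
set vP := vS n lam mu h alpha (Sk n m.+1).
set bQ := bS n lam mu alpha (setD1n (Sk n m.+1) j).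
set bP := bS n lam mu alpha (Sk n m.+1).
have Y0 := @minprinc0 _ (fun k => s * (vQ k - vP k) + (- p) * (bQ k - bP k)) PQ.
have Yj : s * (vQ j - vP j) + (- p) * (bQ j - bP j) = 0.
  apply: Y0 (ltnW Hjn) => i Hi.
  rewrite opx_lin Ey // Ez // Hdel //.
  case: (eqVneq i j) => [->|_]; rewrite /p /s; ring.
have Zn : forall i, (i <= n)%N -> 0 <= - (bQ i - bP i).
  apply: (@minprinc _ (fun k => - (bQ k - bP k)) PQ) => i Hi.
  rewrite opxN Ez // Hdel //.
  case: (eqVneq i j) => [->|_]; last by rewrite mul0r oppr0.
  have := @sT_neg m j.+1 (ltac:(clia)) (ltac:(clia)); have := Hlam j (ltnW Hjn); nra.
have sneg : s < 0 by apply: sT_neg; clia.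
have zj : bQ j - bP j != 0.
  apply/eqP => Z0.
  have E1 := Ez j (ltnW Hjn); rewrite (Hdel j (ltnW Hjn)) eqxx in E1.
  move: E1; rewrite /opx /= Z0 mulr0 sub0r.
  have U := up_ge0 _ _ PQ (ltnW Hjn).
  have D := dn_ge0 _ (ltnW Hjn).
  have Z1 := Zn j.+1 Hjn.
  have Z2 := Zn j.-1 (ltac:(clia)).
  have L := Hlam j (ltnW Hjn).
  have P1 := mulr_ge0 U Z1.
  have P2 := mulr_ge0 D Z2.
  have P3 : lam j * s < 0 by rewrite pmulr_rlt0.
  rewrite -/s -/bQ -/bP => E1; lra.
have zj' : bP j - bQ j != 0 by rewrite -oppr_eq0 opprB.
have sne : s != 0 by rewrite lt_eqF.
have Ey' : vQ j - vP j = p * (bQ j - bP j) / s.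
  have Ys : s * (vQ j - vP j) = p * (bQ j - bP j) by apply: (@eq_by R _ _ _ _ Yj); ring.
  rewrite -Ys; field; exact: sne.
rewrite Ey'; field; apply/andP; split => //.
Qed.

Lemma part_c j : (j < n)%N ->
  let ratio k :=
    (vS n lam mu h alpha (setD1n (Sk n k) j) j - vS n lam mu h alpha (Sk n k) j)
    / (bS n lam mu alpha (Sk n k) j - bS n lam mu alpha (setD1n (Sk n k) j) j) in
  (exists2 k, ((1 <= k <= n)%N && Sk n k j) & nu j = ratio k)
  /\ (forall k, (1 <= k <= n)%N -> Sk n k j -> ratio k <= nu j).
Proof.
move=> Hj ratio; split.
  exists j.+1; first by rewrite /Sk /= leqnn Hj !andbT; clia.
  rewrite /ratio ratio_eq //.
  have E0 := E_c_eq Hj; rewrite /E in E0.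
  have sneg : sT j j.+1 < 0 by apply: sT_neg; clia.
  have sne : sT j j.+1 != 0 by rewrite lt_eqF.
  have -> : pT j j.+1 = - (nu j * sT j j.+1) by lra.
  field; exact: sne.
case=> [//|m] Hk; rewrite /Sk /= => /andP [Hmj _].
rewrite /ratio ratio_eq //.
have sneg : sT m j.+1 < 0 by apply: sT_neg; clia.
have E0 := @E_c m j Hmj Hj; rewrite /E in E0.
rewrite ler_ndivrMr //; lra.
Qed.

Lemma main :
  [/\
    (forall k i, (1 <= k <= n.+1)%N -> (i < n)%N ->
        0 < wS n lam mu alpha (Sk n k) i),
    (forall j, (j.+1 < n)%N -> nuidx n lam mu h alpha j <= nuidx n lam mu h alpha j.+1),
    (forall v : R,
        (forall j, (j < n)%N ->
           (shut_optimal n lam mu h alpha v j <-> v <= nuidx n lam mu h alpha j))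
        /\ exists2 k, (1 <= k <= n.+1)%N &
             forall j, (j < n)%N -> (v <= nuidx n lam mu h alpha j) = Sk n k j)
  & (forall j, (j < n)%N ->
        let ratio k :=
          (vS n lam mu h alpha (setD1n (Sk n k) j) j - vS n lam mu h alpha (Sk n k) j)
          / (bS n lam mu alpha (Sk n k) j - bS n lam mu alpha (setD1n (Sk n k) j) j) in
        (exists2 k, ((1 <= k <= n)%N && Sk n k j) & nuidx n lam mu h alpha j = ratio k)
        /\ (forall k, (1 <= k <= n)%N -> Sk n k j -> ratio k <= nuidx n lam mu h alpha j))
  ].
Proof.
split.
- case=> [//|m] i Hk Hi; rewrite wS_eq.
  have := @sT_neg m i.+1 (ltac:(clia)) (ltac:(clia)); have := Hlam i (ltnW Hi); nra.
- exact: nu_mono.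
- exact: part_b.
- exact: part_c.
Qed.

End Model.

Theorem theorem12 (R : realFieldType) (n : nat) (lam mu h : nat -> R) (alpha : R) :
  (1 <= n)%N ->
  0 < alpha ->
  (forall i, (i <= n)%N -> 0 < lam i) ->
  (forall i, (1 <= i <= n)%N -> 0 < mu i) ->
  (* (i) *)
  (forall i, (1 <= i <= n - 1)%N -> 0 <= Dd lam mu i.+1 <= Dd lam mu i) ->
  0 < Dd lam mu 1 ->
  (* (ii) *)
  (forall i, (1 <= i <= n - 1)%N -> 0 <= Dh h i <= Dh h i.+1) ->
  [/\
    (* (a) positive marginal workloads on F, monotone indices *)
    (forall k i, (1 <= k <= n.+1)%N -> (i < n)%N ->
        0 < wS n lam mu alpha (Sk n k) i),
    (forall j, (j.+1 < n)%N -> nuidx n lam mu h alpha j <= nuidx n lam mu h alpha j.+1),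
    (* (b) indexability relative to threshold policies *)
    (forall nu : R,
        (forall j, (j < n)%N ->
           (shut_optimal n lam mu h alpha nu j <-> nu <= nuidx n lam mu h alpha j))
        /\ exists2 k, (1 <= k <= n.+1)%N &
             forall j, (j < n)%N -> (nu <= nuidx n lam mu h alpha j) = Sk n k j)
  & (* (c) index as a maximum of marginal productivity rates *)
    (forall j, (j < n)%N ->
        let ratio k :=
          (vS n lam mu h alpha (setD1n (Sk n k) j) j - vS n lam mu h alpha (Sk n k) j)
          / (bS n lam mu alpha (Sk n k) j - bS n lam mu alpha (setD1n (Sk n k) j) j) in
        (exists2 k, ((1 <= k <= n)%N && Sk n k j) & nuidx n lam mu h alpha j = ratio k)
        /\ (forall k, (1 <= k <= n)%N -> Sk n k j -> ratio k <= nuidx n lam mu h alpha j))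
  ].
Proof.
move=> Hn Ha Hlam Hmu Hd Hd1 Hh.
exact: (@main R n lam mu h alpha Ha Hlam Hmu Hn Hd Hd1 Hh).
Qed.
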